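(* Let $C\subseteq\mathbb{F}_2^n$ be a binary linear constant weight code of dimension $k\ge2$. Then $\mathrm{PAut}(C)\cong S_3$ if and only if $k=2$, the weight of $C$ is $2$, and $n\in\{3,4\}$.
   Context: A binary linear constant weight code of weight $w$ is an $\mathbb{F}_2$-subspace of $\mathbb{F}_2^n$ all of whose non-zero vectors have exactly $w$ coordinates equal to $1$. $S_n$ acts on $\mathbb{F}_2^n$ by $\sigma(v_1,\dots,v_n)=(v_{\sigma^{-1}(1)},\dots,v_{\sigma^{-1}(n)})$, and $\mathrm{PAut}(C)=\{\sigma\in S_n:\sigma(C)=C\}$. *)

(* Defs.v *)
From HB Require Import structures.
From mathcomp Require Import all_boot all_order all_algebra all_fingroup.
Set Implicit Arguments. Unset Strict Implicit. Unset Printing Implicit Defensive.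
Import GRing.Theory.
Local Open Scope ring_scope.

Definition wt (n : nat) (v : 'rV['F_2]_n) : nat := #|[set i | v 0 i != 0]|.

Definition constant_weight (n : nat) (C : {vspace 'rV['F_2]_n}) (w : nat) : Prop :=
  forall v : 'rV['F_2]_n, v \in C -> v != 0 -> wt v = w.

Definition permv (n : nat) (s : 'S_n) (v : 'rV['F_2]_n) : 'rV['F_2]_n :=
  \row_i v 0 (s^-1 i)%g.

Definition PAut (n : nat) (C : {vspace 'rV['F_2]_n}) : {set 'S_n} :=
  [set s : 'S_n | [set permv s v | v in C] == [set v | v \in C]].

(* Main.v *)
Require Import Defs.
From HB Require Import structures.
From mathcomp Require Import all_boot all_order all_algebra all_fingroup.
From mathcomp Require Import zify ring.
Set Implicit Arguments. Unset Strict Implicit. Unset Printing Implicit Defensive.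
Import GRing.Theory.
Local Open Scope ring_scope.

Lemma F2_cases (a : 'F_2) : a = 0 \/ a = 1.
Proof.
case: a => [[|[|//]] Ha]; [left|right]; exact: val_inj.
Qed.

Lemma F2_11 : (1 + 1 : 'F_2) = 0.
Proof. apply: val_inj; reflexivity. Qed.

Lemma F2_add_self (a : 'F_2) : a + a = 0.
Proof. case: (F2_cases a) => ->; [exact: addr0 | exact: F2_11]. Qed.

Lemma F2_oppr m (c : 'rV['F_2]_m) : - c = c.
Proof.
apply/rowP => j; rewrite mxE; apply/eqP; rewrite eq_sym -subr_eq0 opprK F2_add_self //.
Qed.

Definition dot m (x c : 'rV['F_2]_m) : 'F_2 := (x *m c^T) 0 0.

Lemma dotDr m (x c d : 'rV['F_2]_m) : dot x (c + d) = dot x c + dot x d.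
Proof. by rewrite /dot linearD /= mulmxDr mxE. Qed.

Lemma dotDl m (x y c : 'rV['F_2]_m) : dot (x + y) c = dot x c + dot y c.
Proof. by rewrite /dot mulmxDl mxE. Qed.

Lemma dot0l m (c : 'rV['F_2]_m) : dot 0 c = 0.
Proof. by rewrite /dot mul0mx mxE. Qed.

Lemma dot0r m (c : 'rV['F_2]_m) : dot c 0 = 0.
Proof. by rewrite /dot trmx0 mulmx0 mxE. Qed.

Lemma dotM m (x c : 'rV['F_2]_m) (B : 'M['F_2]_m) : dot x (c *m B) = dot (x *m B^T) c.
Proof. by rewrite /dot trmx_mul mulmxA. Qed.

Lemma dot_delta m (j : 'I_m) (c : 'rV['F_2]_m) : dot (delta_mx 0 j) c = c 0 j.
Proof.
rewrite /dot mxE (bigD1 j) //= big1 ?addr0; last first.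
  by move=> i /negbTE nij; rewrite mxE eqxx nij mul0r.
by rewrite !mxE !eqxx mul1r.
Qed.

Definition e2 (a : 'F_2) : int := if a == 0 then 1 else -1.

Lemma e2D a b : e2 (a + b) = e2 a * e2 b.
Proof.
case: (F2_cases a) => ->; case: (F2_cases b) => ->; rewrite ?F2_11 ?addr0 ?add0r /e2 //=.
Qed.

Lemma e2_01 (a : 'F_2) : e2 a = 1 - 2 * (a != 0)%:R.
Proof. by rewrite /e2; case: (a == 0). Qed.

Lemma card_rV m : #|{: 'rV['F_2]_m}| = (2 ^ m)%N.
Proof. by rewrite card_mx card_Fp // mul1n. Qed.

Lemma sum_e2 m (c : 'rV['F_2]_m) :
  \sum_(x : 'rV['F_2]_m) e2 (dot x c) = if c == 0 then (2 ^ m)%:R else 0.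
Proof.
case: eqP => [->|/eqP nz].
  rewrite (eq_bigr (fun _ => 1)) => [|x _]; last by rewrite dot0r.
  by rewrite sumr_const card_rV.
have [j cj]: exists j, c 0 j != 0.
  apply/existsP; apply: contraR nz; rewrite negb_exists => /forallP H.
  by apply/eqP/rowP => j; rewrite mxE; apply/eqP; move: (H j); rewrite negbK.
have cj1 : c 0 j = 1 by case: (F2_cases (c 0 j)) cj => ->.
set S := \sum_x _.
have : S = - S.
  rewrite {1}/S (reindex_inj (addrI (delta_mx 0 j))) /= /S -sumrN.
  apply: eq_bigr => x _; rewrite dotDl dot_delta cj1 e2D /e2 /=.
  by rewrite mulN1r.
move=> HS; lia.
Qed.

Section Code.
Variables (n : nat) (C : {vspace 'rV['F_2]_n}) (w : nat).
Hypothesis Hcw : constant_weight C w.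
Local Notation k := (\dim C).

Definition gcol (i : 'I_n) : 'rV['F_2]_k := \row_j ((vbasis C)`_j) 0 i.
Definition enc (x : 'rV['F_2]_k) : 'rV['F_2]_n := \sum_j x 0 j *: (vbasis C)`_j.

Lemma enc_entry x i : enc x 0 i = dot x (gcol i).
Proof.
rewrite /enc /dot summxE mxE; apply: eq_bigr => j _.
by rewrite !mxE.
Qed.

Lemma enc_mem x : enc x \in C.
Proof.
rewrite /enc; apply: rpred_sum => j _; apply: rpredZ.
by apply: vbasis_mem; apply: mem_nth; rewrite size_tuple.
Qed.

Lemma encD x y : enc (x + y) = enc x + enc y.
Proof. by rewrite /enc -big_split; apply: eq_bigr => j _; rewrite mxE scalerDl. Qed.

Lemma enc_surj v : v \in C -> v = enc (\row_j coord (vbasis C) j v).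
Proof.
move/coord_vbasis => {1}->; rewrite /enc; apply: eq_bigr => j _; by rewrite mxE.
Qed.

Lemma enc_eq0 x : enc x = 0 -> x = 0.
Proof.
move=> H; apply/rowP => j; rewrite mxE.
have /freeP := basis_free (vbasisP C).
by move=> /(_ (fun j => x 0 j) H j).
Qed.

Lemma enc_inj : injective enc.
Proof.
move=> x y H; apply/eqP; rewrite -subr_eq0; apply/eqP; apply: enc_eq0.
have -> : x - y = x + y by rewrite F2_oppr.
by rewrite encD H -{1}(F2_oppr (enc y)) addNr.
Qed.

Lemma wt_enc x : x != 0 -> #|[set i | dot x (gcol i) != 0]| = w.
Proof.
move=> nz; rewrite -(Hcw (enc_mem x)); last first.
  by apply: contra nz => /eqP /enc_eq0 ->.
by rewrite /wt; apply: eq_card => i; rewrite !inE enc_entry.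
Qed.

End Code.

Section Count.
Variables (n : nat) (C : {vspace 'rV['F_2]_n}) (w : nat).
Hypothesis Hcw : constant_weight C w.
Local Notation k := (\dim C).

Definition Nc (c : 'rV['F_2]_k) := #|[set i | gcol C i == c]|.

Lemma sum_bool_card (I : finType) (b : pred I) :
  \sum_(i : I) ((b i)%:R : int) = (#|[set i | b i]|)%:R.
Proof.
rewrite -sumr_const [RHS]big_mkcond /=; apply: eq_bigr => i _; rewrite inE.
by case: (b i).
Qed.

Lemma inner_sum x : \sum_i e2 (dot x (gcol C i)) = n%:R - 2 * (#|[set i | dot x (gcol C i) != 0]|)%:R.
Proof.
under eq_bigr do rewrite e2_01.
by rewrite sumrB sumr_const card_ord -mulr_sumr sum_bool_card.
Qed.

Lemma Ncount c : ((2 ^ k * Nc c)%:R : int) = (n%:R - 2 * w%:R) * (if c == 0 then (2 ^ k)%:R else 0) + 2 * w%:R.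
Proof.
have A : ((2 ^ k * Nc c)%:R : int) = \sum_i \sum_x e2 (dot x (gcol C i + c)).
  under eq_bigr do rewrite sum_e2 addr_eq0 F2_oppr.
  rewrite -big_mkcond sumr_const /Nc natrM -[RHS]mulr_natr; congr (_ * _%:R).
  by apply: eq_card => i; rewrite inE.
rewrite A exchange_big /=.
under eq_bigr do (under eq_bigr do rewrite dotDr e2D mulrC; rewrite -mulr_sumr inner_sum).
rewrite (bigD1 0) //= dot0l.
have E : forall x : 'rV['F_2]_k, (x != 0) -> e2 (dot x c) * (n%:R - 2 * (#|[set i | dot x (gcol C i) != 0]|)%:R) = e2 (dot x c) * (n%:R - 2 * w%:R).
  by move=> x nz; rewrite (wt_enc Hcw nz).
rewrite (eq_bigr _ E) -mulr_suml.
have S := sum_e2 c; rewrite (bigD1 0) //= dot0l in S.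
have -> : \sum_(i | i != 0) e2 (dot i c) = (if c == 0 then (2 ^ k)%:R else 0) - e2 0.
  by rewrite -S addrAC subrr add0r.
have -> : [set i | dot 0 (gcol C i) != 0] = set0.
  by apply/setP => i; rewrite !inE dot0l eqxx.
rewrite cards0 /e2 eqxx.
ring.
Qed.

End Count.

Lemma cnt_tuple (T : eqType) n (f : 'I_n -> T) (a : pred T) :
  count a [tuple f i | i < n] = #|[set i | a (f i)]|.
Proof.
by rewrite /= -sum1_count big_map big_enum_cond /= sum1_card cardsE.
Qed.

Lemma card_part (T : finType) n (f : 'I_n -> T) (a : pred T) :
  #|[set i | a (f i)]| = (\sum_(c | a c) #|[set i | f i == c]|)%N.
Proof.
rewrite -sum1_card (partition_big f a) /=; last by move=> i; rewrite inE.
apply: eq_bigr => c ac; rewrite -sum1_card; apply: eq_bigl => i.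
rewrite !inE; case: eqP => [->|]; by rewrite ?ac ?andbF.
Qed.

Section Real.
Variables (n : nat) (C : {vspace 'rV['F_2]_n}) (w : nat).
Hypothesis Hcw : constant_weight C w.
Local Notation k := (\dim C).

Lemma Nc_nz c : c != 0 -> (2 ^ k * Nc (C:=C) c = 2 * w)%N.
Proof.
move=> nz; have := Ncount Hcw c; rewrite (negbTE nz) mulr0 add0r.
move=> H; lia.
Qed.

Lemma Nc_const c d : c != 0 -> d != 0 -> Nc (C:=C) c = Nc (C:=C) d.
Proof.
move=> nc nd; apply/eqP; rewrite -(eqn_pmul2l (expn_gt0 2 k)).
by rewrite !Nc_nz.
Qed.

Definition realizes (s : 'S_n) (B : 'M['F_2]_k) :=
  [forall i, gcol C (s^-1 i)%g == gcol C i *m B].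

Lemma permv_enc s B x : realizes s B -> permv s (enc x) = enc (x *m B^T).
Proof.
move/forallP => H; apply/rowP => i; rewrite mxE !enc_entry.
by rewrite (eqP (H i)) dotM.
Qed.

Lemma realizes_PAut s B : B \in unitmx -> realizes s B -> s \in PAut C.
Proof.
move=> uB rs; rewrite inE; apply/eqP/setP => u; rewrite inE.
apply/imsetP/idP => [[v vC ->]|uC].
  by rewrite (enc_surj vC) (permv_enc _ rs) enc_mem.
exists (enc ((\row_j coord (vbasis C) j u) *m invmx B^T)); first exact: enc_mem.
by rewrite (permv_enc _ rs) mulmxKV ?unitmx_tr // -enc_surj.
Qed.

Lemma realizes_uniq s B B' : realizes s B -> realizes s B' -> B = B'.
Proof.
move=> r1 r2; apply/trmx_inj/row_matrixP => j.
have := permv_enc (delta_mx 0 j) r1; rewrite (permv_enc _ r2) => /enc_inj.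
by rewrite -!rowE.
Qed.

Lemma exists_realize B : B \in unitmx -> exists s, realizes s B.
Proof.
move=> uB.
have NB c : Nc (C:=C) (c *m B) = Nc (C:=C) c.
  have [->|nz] := eqVneq c 0; first by rewrite mul0mx.
  apply: Nc_const => //; apply: contra nz => /eqP H.
  by rewrite -(mulmxK uB c) H mul0mx.
have : perm_eq [tuple gcol C i *m B | i < n] [tuple gcol C i | i < n].
  apply/seq.permP => a; rewrite !cnt_tuple !card_part.
  apply: eq_bigr => c _.
  have -> : #|[set i | gcol C i *m B == c]| = Nc (C:=C) (c *m invmx B).
    apply: eq_card => i; rewrite !inE -{1}(mulmxKV uB c).
    by rewrite (can_eq (mulmxK uB)).
  by rewrite -NB mulmxKV.
case/tuple_permP => p Hp.
exists p^-1%g; apply/forallP => i; rewrite invgK.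
have := congr1 (fun t => tnth t i) (val_inj Hp).
by rewrite !tnth_mktuple => ->.
Qed.

End Real.

Section Cnt.
Variables (n : nat) (C : {vspace 'rV['F_2]_n}) (w : nat).
Hypothesis Hcw : constant_weight C w.
Local Notation k := (\dim C).

Definition Uset := [set B : 'M['F_2]_k | B \in unitmx].

Definition fr (B : 'M['F_2]_k) : 'S_n := odflt 1%g [pick s | realizes (C:=C) s B].

Lemma fr_real B : B \in unitmx -> realizes (C:=C) (fr B) B.
Proof.
move=> uB; rewrite /fr; case: pickP => [s //|none].
by have [s rs] := exists_realize Hcw uB; move: (none s); rewrite rs.
Qed.

Lemma fr_PAut B : B \in unitmx -> fr B \in PAut C.
Proof. by move=> uB; apply: (realizes_PAut uB (fr_real uB)). Qed.

Lemma card_PAut_ge : (#|Uset| <= #|PAut C|)%N.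
Proof.
have inj : {in Uset &, injective fr}.
  move=> B B'; rewrite !inE => uB uB' H.
  by apply: (realizes_uniq (fr_real uB)); rewrite H fr_real.
rewrite -(card_in_imset inj); apply: subset_leq_card.
by apply/subsetP => s /imsetP [B]; rewrite inE => uB ->; apply: fr_PAut.
Qed.

Lemma card_PAut_ge2 (i i' : 'I_n) : i != i' -> gcol C i = gcol C i' ->
  (2 * #|Uset| <= #|PAut C|)%N.
Proof.
move=> nii Hii.
set t := tperm i i'.
have gt x : gcol C (t x) = gcol C x.
  by rewrite /t; case: tpermP => [->|->|] //; rewrite Hii.
pose h (p : bool * 'M['F_2]_k) : 'S_n := if p.1 then (t * fr p.2)%g else fr p.2.
have hr p : p.2 \in unitmx -> realizes (C:=C) (h p) p.2.
  case: p => [b B] /= uB; rewrite /h /=; case: b => //=; last exact: fr_real.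
  apply/forallP => j; rewrite invMg permM tpermV gt.
  by move/forallP: (fr_real uB) => /(_ j).
have D : [set p : bool * 'M['F_2]_k | p.2 \in unitmx] = setX [set: bool] Uset.
  by apply/setP => -[b B]; rewrite !inE.
have inj : {in [set p : bool * 'M['F_2]_k | p.2 \in unitmx] &, injective h}.
  move=> [b B] [b' B']; rewrite !inE /= => uB uB' H.
  have EB : B = B' by apply: (realizes_uniq (hr (b, B) uB)); rewrite H hr.
  subst B'; congr (_, _).
  have E1 : (t * fr B)%g = fr B -> False.
    move/permP => /(_ i); rewrite permM /t tpermL => /perm_inj /eqP.
    by rewrite eq_sym (negbTE nii).
  move: H; rewrite /h /=; case: b; case: b' => // H;
    by [case: (E1 H) | case: (E1 (esym H))].
have := card_in_imset inj; rewrite D cardsX cardsT card_bool => <-.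
apply: subset_leq_card; apply/subsetP => s /imsetP [p]; rewrite inE => up ->.
case/andP: up => _; rewrite inE => up; exact: (realizes_PAut up (hr p up)).
Qed.

Lemma card_Uset_GL : (0 < k)%N -> #|Uset| = (2 ^ 'C(k, 2) * \prod_(1 <= i < k.+1) (2 ^ i - 1))%N.
Proof.
move: Uset; case: k => // k' U _.
Abort.

End Cnt.

Lemma permv_inj n (s : 'S_n) : injective (permv s).
Proof.
move=> u v H; apply/rowP => i; have := congr1 (fun x : 'rV['F_2]_n => x 0 (s i)) H.
by rewrite /permv !mxE permK.
Qed.

Lemma permvM n (s t : 'S_n) v : permv (s * t)%g v = permv t (permv s v).
Proof. by apply/rowP => i; rewrite !mxE invMg permM. Qed.

Lemma permv1 n v : permv (1%g : 'S_n) v = v.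
Proof. by apply/rowP => i; rewrite !mxE invg1 perm1. Qed.

Lemma PAutP n (C : {vspace 'rV['F_2]_n}) s :
  reflect (forall v, v \in C -> permv s v \in C) (s \in PAut C).
Proof.
rewrite inE; apply: (iffP eqP) => [H v vC|H].
  have : permv s v \in [set permv s v | v in C] by apply: imset_f.
  by rewrite H inE.
apply/eqP; rewrite eqEcard; apply/andP; split.
  by apply/subsetP => u /imsetP [v vC ->]; rewrite inE H.
rewrite card_in_imset; last by move=> u v _ _; apply: permv_inj.
by apply: subset_leq_card; apply/subsetP => v; rewrite inE.
Qed.

Lemma PAut_group_set n (C : {vspace 'rV['F_2]_n}) : group_set (PAut C).
Proof.
apply/group_setP; split.
  by apply/PAutP => v; rewrite permv1.
move=> s t /PAutP Hs /PAutP Ht; apply/PAutP => v vC.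
by rewrite permvM Ht // Hs.
Qed.

Canonical PAut_group n (C : {vspace 'rV['F_2]_n}) := group (PAut_group_set C).

Lemma isog_stab m (l : 'I_m.+1) (P : {set 'S_m.+1}) :
  (forall s, s \in P -> s l = l) -> (m`! <= #|P|)%N -> P \isog [set: 'S_m].
Proof.
move=> Pl Pc.
pose f := lift_perm l l.
have fM : {in [set: 'S_m] &, {morph f : x y / (x * y)%g}}.
  by move=> x y _ _; rewrite /f lift_permM.
pose F := Morphism fM.
have finj : {in [set: 'S_m] &, injective F}.
  move=> x y _ _ H; apply/permP => z.
  have := congr1 (fun p : 'S_m.+1 => p (lift l z)) H.
  by rewrite /= /f !lift_perm_lift => /lift_inj.
pose Q := [set s : 'S_m.+1 | s l == l].
have cQ : #|Q| = m`!.
  transitivity #|perm_on [set~ l]|; last by rewrite card_perm cardsC1 card_ord.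
  apply: eq_card => s; rewrite inE /perm_on.
  apply/eqP/subsetP => [sl x|H]; first by rewrite !inE; apply: contra => /eqP ->; rewrite sl.
  by apply/eqP; apply: contraT => /H; rewrite !inE eqxx.
have PQ : P = Q.
  apply/eqP; rewrite eqEcard cQ Pc andbT; apply/subsetP => s sP.
  by rewrite inE Pl.
have FQ : (F @* [set: 'S_m])%g = Q.
  apply/eqP; rewrite eqEcard cQ morphimEdom card_in_imset // cardsT card_Sn leqnn andbT.
  by apply/subsetP => s /imsetP [x _ ->]; rewrite inE /= /f lift_perm_id.
rewrite PQ -FQ isog_sym; apply: sub_isog => //; exact/injmP.
Qed.

Lemma cU k : #|[set B : 'M['F_2]_k.+1 | B \in unitmx]| = #|('GL_k.+1['F_2])%g|.
Proof. rewrite cardsT /= card_sub; apply: eq_card => A; rewrite inE //. Qed.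
Lemma cU2 (k : nat) : (0 < k)%N -> #|[set B : 'M['F_2]_k | B \in unitmx]| = (2 ^ 'C(k, 2) * \prod_(1 <= i < k.+1) (2 ^ i - 1))%N.
Proof. case: k => // k _; by rewrite cU card_GL // card_Fp. Qed.
Lemma c3 (k : nat) : (3 <= k)%N -> (8 <= 2 ^ 'C(k, 2) * \prod_(1 <= i < k.+1) (2 ^ i - 1))%N.
Proof.
move=> k3.
have h1 : (3 <= 'C(k, 2))%N by apply: (leq_trans _ (leq_bin2l 2 k3)).
have h2 : (0 < \prod_(1 <= i < k.+1) (2 ^ i - 1))%N.
  rewrite big_nat; apply: prodn_cond_gt0 => i /andP [i1 _].
  by rewrite subn_gt0 -{1}(expn0 2) ltn_exp2l.
apply: (leq_trans _ (leq_pmulr _ h2)).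
apply: (@leq_trans (2 ^ 3)) => //; by rewrite leq_exp2l.
Qed.
Lemma c2 : (2 ^ 'C(2, 2) * \prod_(1 <= i < 3) (2 ^ i - 1))%N = 6%N.
Proof. by rewrite big_ltn // big_ltn // big_geq. Qed.

Section Final.
Variables (n : nat) (C : {vspace 'rV['F_2]_n}) (w : nat).
Hypothesis Hcw : constant_weight C w.
Local Notation k := (\dim C).

Lemma two_cols (c : 'rV['F_2]_k) : (2 <= Nc (C:=C) c)%N -> (2 * #|Uset C| <= #|PAut C|)%N.
Proof.
move=> /card_gt1P [i [i' [ii ii' nii]]].
apply: (card_PAut_ge2 Hcw nii).
by move: ii ii'; rewrite !inE => /eqP -> /eqP ->.
Qed.

Lemma fix_zero l s : gcol C l = 0 -> #|[set i | gcol C i == 0]| = 1%N ->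
  s \in PAut C -> s l = l.
Proof.
move=> l0 c1 sP.
have sV : (s^-1)%g \in PAut C by rewrite groupV.
have Z : gcol C (s l) = 0.
  apply/rowP => j; rewrite [RHS]mxE -dot_delta -enc_entry.
  have /PAutP /(_ _ (enc_mem (C:=C) (delta_mx 0 j))) := sV.
  move=> /enc_surj E; have := congr1 (fun v : 'rV['F_2]_n => v 0 l) E.
  by rewrite /= enc_entry l0 dot0r !mxE invgK.
case/cards1P: (introT eqP c1) => x Ex.
have : l \in [set i | gcol C i == 0] by rewrite inE l0.
have : s l \in [set i | gcol C i == 0] by rewrite inE Z.
by rewrite Ex !inE => /eqP -> /eqP ->.
Qed.

Lemma w_pos : (0 < \dim C)%N -> (0 < w)%N.
Proof.
move=> k0; pose e : 'rV['F_2]_k := delta_mx 0 (Ordinal k0).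
have enz : e != 0.
  apply/eqP => /rowP /(_ (Ordinal k0)); rewrite !mxE !eqxx => /eqP.
  by rewrite oner_eq0.
rewrite lt0n -(wt_enc Hcw enz) cards_eq0; apply: contra enz => /eqP E.
apply/eqP; apply: (@enc_eq0 _ C); apply/rowP => i; rewrite enc_entry mxE.
apply/eqP; apply: contraT => H.
have : i \in [set i | dot e (gcol C i) != 0] by rewrite inE.
by rewrite E inE.
Qed.

End Final.



Theorem theorem5p8 (n : nat) (C : {vspace 'rV['F_2]_n}) (w : nat)
  (Hcw : constant_weight C w) (Hk : (2 <= \dim C)%N) :
  (PAut C \isog [set: 'S_3]) <-> (\dim C = 2%N /\ w = 2%N /\ (n = 3%N \/ n = 4%N)).
Proof.
have k0 : (0 < \dim C)%N by apply: ltnW.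
pose e : 'rV['F_2]_(\dim C) := delta_mx 0 (Ordinal k0).
have enz : e != 0.
  apply/eqP => /rowP /(_ (Ordinal k0)); rewrite !mxE !eqxx => /eqP.
  by rewrite oner_eq0.
have Hm := Nc_nz Hcw enz.
have Hm2 := @two_cols _ C w Hcw e.
have Hz := Ncount Hcw 0; rewrite eqxx in Hz.
have Hz2 := @two_cols _ C w Hcw 0.
have wp := w_pos Hcw k0.
have HU := card_PAut_ge Hcw.
have UC : #|Uset C| = (2 ^ 'C(\dim C, 2) * \prod_(1 <= i < (\dim C).+1) (2 ^ i - 1))%N.
  exact: cU2.
split.
- move=> iso.
  have c6 : #|PAut C| = 6%N by rewrite (card_isog iso) cardsT card_Sn.
  move: (Nc (C:=C) e) (Nc (C:=C) 0) Hm Hm2 Hz Hz2 => m z Hm Hm2 Hz Hz2.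
  move: (#|Uset C|) UC HU Hm2 Hz2 => u UC HU Hm2 Hz2.
  rewrite c6 in HU Hm2 Hz2.
  have k2 : \dim C = 2%N.
    apply/eqP; rewrite eqn_leq Hk andbT; apply: contraT; rewrite -ltnNge => k3.
    by have := c3 k3; rewrite -UC => /(leq_trans) /(_ HU).
  move: (\dim C) k2 UC Hm Hz => kk -> UC Hm Hz.
  rewrite c2 in UC; subst u.
  have m1 : m = 1%N.
    case: m Hm Hm2 => [|[|m]] Hm Hm2 //; first by lia.
    by have := Hm2 isT.
  subst m.
  have z1 : (z <= 1)%N by case: z Hz Hz2 => [|[|z]] // _ /(_ isT).
  split => //; split; first by lia.
  lia.
- case=> k2 [w2 n34].
  case: n34 => n_eq; subst n.
  + have : PAut C = [set: 'S_3].
      apply/eqP; rewrite eqEcard subsetT cardsT card_Sn /=.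
      by rewrite (leq_trans _ HU) // UC k2 c2.
    move=> ->; exact: isog_refl.
  + have z1 : Nc (C:=C) 0 = 1%N.
      move: (Nc (C:=C) 0) Hz => z; rewrite k2 w2 => Hz; lia.
    case/cards1P: (introT eqP z1) => l El.
    have l0 : gcol C l = 0.
      have : l \in [set i | gcol C i == 0] by rewrite El set11.
      by rewrite inE => /eqP.
    apply: (@isog_stab 3 l).
      by move=> s sP; apply: (fix_zero l0 z1 sP).
    by rewrite (leq_trans _ HU) // UC k2 c2.
Qed.
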